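(* Fix $g>0$, $p_0<p_1<0$, $\ell>0$ and $[\![\rho]\!]<0$. If $\Gamma_{\mathrm{rel}}>0$ satisfies $|p_1|=\Gamma_{\mathrm{rel}}\ell$, then there exists a one-parameter family $\{(H(\cdot;\lambda),Q(\lambda)):\lambda>0\}$ of solutions to the laminar flow problem with $H_p>0$, each of which has relative circulation $\Gamma_{\mathrm{rel}}$ on the lid (i.e. $H_p(0;\lambda)^{-1}=\Gamma_{\mathrm{rel}}$). Explicitly, $$H(p;\lambda)=\begin{cases}\dfrac{p}{\Gamma_{\mathrm{rel}}}+\ell+\dfrac{p_1-p_0}{\lambda}, & p_1<p<0,\\[2mm] \dfrac{p-p_0}{\lambda}, & p_0<p<p_1,\end{cases}\qquad Q(\lambda)=\frac{2g[\![\rho]\!](p_1-p_0)}{\lambda}+\Gamma_{\mathrm{rel}}^2-\lambda^2 .$$ In particular the depth of the fluid at parameter $\lambda$ is $d(\lambda)=H(p_1;\lambda)=\dfrac{p_1-p_0}{\lambda}$ and the width of the channel is $W(\lambda)=\ell+d(\lambda)$.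
   Context: Laminar flow problem: find $Q\in\mathbb R$ and $H\in C([p_0,0])$, of class $C^2$ on $[p_0,p_1]$ and on $[p_1,0]$ (one-sided derivatives at $p_1$), such that $H_{pp}=0$ on $(p_0,p_1)\cup(p_1,0)$; $[\![H_p^{-2}]\!]+2g[\![\rho]\!]H(p_1)-Q=0$; $H(0)=\ell+d(H)$ with $d(H)=H(p_1)$; $H(p_0)=0$. Here $[\![f]\!]=f(p_1^+)-f(p_1^-)$ (air value minus water value), $[\![\rho]\!]=\rho_{\mathrm{air}}-\rho_{\mathrm{water}}$, and $g$ is the gravitational constant. *)

(* Defs.v *)
From Stdlib Require Import Reals.
From Coquelicot Require Import Coquelicot.
Open Scope R_scope.

Definition Icc (a b : R) (x : R) : Prop := a <= x <= b.

Definition derive_within (a b : R) (f : R -> R) (x l : R) : Prop :=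
  filterlim (fun y => (f y - f x) / (y - x))
    (within (fun y => a <= y <= b /\ y <> x) (locally x)) (locally l).

Definition cont_within (a b : R) (f : R -> R) (x : R) : Prop :=
  filterlim f (within (fun y => a <= y <= b) (locally x)) (locally (f x)).

Definition C2_on (a b : R) (f f1 f2 : R -> R) : Prop :=
  (forall x, a <= x <= b -> derive_within a b f x (f1 x)) /\
  (forall x, a <= x <= b -> derive_within a b f1 x (f2 x)) /\
  (forall x, a <= x <= b -> cont_within a b f2 x).

(* (H,Q) solves the laminar flow problem; Hw1,Hw2 are H_p, H_pp on the water
   region [p0,p1], Ha1,Ha2 are H_p, H_pp on the air region [p1,0].
   jrho = [[rho]] = rho_air - rho_water.
   [[H_p^{-2}]] = H_p(p1^+)^{-2} - H_p(p1^-)^{-2}, d(H) = H(p1). *)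
Definition laminar_solution (g jrho p0 p1 ell : R) (H : R -> R) (Q : R)
  (Hw1 Hw2 Ha1 Ha2 : R -> R) : Prop :=
  (forall x, p0 <= x <= 0 -> cont_within p0 0 H x) /\
  C2_on p0 p1 H Hw1 Hw2 /\
  C2_on p1 0 H Ha1 Ha2 /\
  (forall p, p0 < p < p1 -> Hw2 p = 0) /\
  (forall p, p1 < p < 0 -> Ha2 p = 0) /\
  (/ (Ha1 p1 ^ 2) - / (Hw1 p1 ^ 2) + 2 * g * jrho * H p1 - Q = 0) /\
  H 0 = ell + H p1 /\
  H p0 = 0.

(* Main.v *)
Require Import Defs.
From Stdlib Require Import Reals Lra.
From Coquelicot Require Import Coquelicot.
Open Scope R_scope.

Lemma aff_der (a b c d : R) (f : R -> R) x :
  (forall y, a <= y <= b -> f y = c * y + d) -> a <= x <= b ->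
  derive_within a b f x c.
Proof.
  intros Hf Hx. unfold derive_within.
  apply filterlim_ext_loc with (fun _ => c).
  - unfold within. apply filter_forall. intros y [Hy Hne].
    rewrite (Hf y Hy), (Hf x Hx). field. lra.
  - apply filterlim_const.
Qed.

Lemma cont_gen (a b : R) (f : R -> R) x :
  continuity_pt f x -> cont_within a b f x.
Proof.
  intros H. unfold cont_within.
  eapply filterlim_filter_le_1. apply filter_le_within.
  apply continuity_pt_filterlim. exact H.
Qed.

Definition HH (p0 p1 Gam lam p : R) : R :=
  (p - p0) / lam + ((p - p1) + Rabs (p - p1)) / 2 * (/ Gam - / lam).

Lemma HH_cont p0 p1 Gam lam x : continuity_pt (HH p0 p1 Gam lam) x.
Proof.
  unfold HH. apply continuity_pt_plus.
  - apply continuity_pt_mult. apply continuity_pt_minus.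
    apply derivable_continuous_pt, derivable_pt_id. apply continuity_pt_const. intros ? ?; auto.
    apply continuity_pt_const. intros ? ?; auto.
  - apply continuity_pt_mult. 2:{ apply continuity_pt_const. intros ? ?; auto. }
    apply continuity_pt_mult. 2:{ apply continuity_pt_const. intros ? ?; auto. }
    apply continuity_pt_plus.
    + apply continuity_pt_minus.
      apply derivable_continuous_pt, derivable_pt_id. apply continuity_pt_const. intros ? ?; auto.
    + apply (continuity_pt_comp (fun p => p - p1) Rabs).
      apply continuity_pt_minus.
      apply derivable_continuous_pt, derivable_pt_id. apply continuity_pt_const. intros ? ?; auto.
      apply Rcontinuity_abs.
Qed.

Theorem lemma3p2 :
  forall (g p0 p1 ell jrho Gam : R),
    0 < g -> p0 < p1 -> p1 < 0 -> 0 < ell -> jrho < 0 -> 0 < Gam ->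
    Rabs p1 = Gam * ell ->
    exists (H : R -> R -> R) (Q : R -> R),
      forall lam : R, 0 < lam ->
        (exists Hw1 Hw2 Ha1 Ha2 : R -> R,
            laminar_solution g jrho p0 p1 ell (H lam) (Q lam) Hw1 Hw2 Ha1 Ha2 /\
            (forall p, p0 <= p <= p1 -> 0 < Hw1 p) /\
            (forall p, p1 <= p <= 0 -> 0 < Ha1 p) /\
            / Ha1 0 = Gam) /\
        (forall p, p1 < p < 0 -> H lam p = p / Gam + ell + (p1 - p0) / lam) /\
        (forall p, p0 < p < p1 -> H lam p = (p - p0) / lam) /\
        Q lam = 2 * g * jrho * (p1 - p0) / lam + Gam ^ 2 - lam ^ 2 /\
        H lam p1 = (p1 - p0) / lam /\
        H lam 0 = ell + (p1 - p0) / lam.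
Proof.
  intros g p0 p1 ell jrho Gam Hg H01 H1 Hl Hj HG Habs.
  rewrite Rabs_left in Habs by lra.
  assert (Hell : ell = - p1 / Gam) by (rewrite Habs; field; lra).
  exists (fun lam => HH p0 p1 Gam lam).
  exists (fun lam => 2 * g * jrho * (p1 - p0) / lam + Gam ^ 2 - lam ^ 2).
  intros lam Hlam.
  assert (Hw : forall p, p <= p1 -> HH p0 p1 Gam lam p = / lam * p + (- p0 / lam)).
  { intros p Hp. unfold HH. rewrite Rabs_left1 by lra. field. lra. }
  assert (Ha : forall p, p1 <= p -> HH p0 p1 Gam lam p = / Gam * p + (ell + (p1 - p0) / lam)).
  { intros p Hp. unfold HH. rewrite Rabs_right by lra. rewrite Hell. field. lra. }
  assert (E1 : HH p0 p1 Gam lam p1 = (p1 - p0) / lam) by (rewrite Hw by lra; field; lra).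
  assert (E0 : HH p0 p1 Gam lam 0 = ell + (p1 - p0) / lam) by (rewrite Ha by lra; field; lra).
  split; [|split; [|split; [|split]]]; auto.
  - exists (fun _ => / lam), (fun _ => 0), (fun _ => / Gam), (fun _ => 0).
    split; [|split; [|split]].
    + split; [|split; [|split; [|split; [|split; [|split; [|split]]]]]].
      * intros x _. apply cont_gen, HH_cont.
      * split; [|split].
        -- intros x Hx. apply aff_der with (-p0/lam); auto. intros y Hy; apply Hw; lra.
        -- intros x Hx. apply aff_der with (/lam); auto. intros; ring.
        -- intros x _. apply cont_gen, continuity_pt_const. intros ? ?; auto.
      * split; [|split].
        -- intros x Hx. apply aff_der with (ell + (p1 - p0) / lam); auto. intros y Hy; apply Ha; lra.
        -- intros x Hx. apply aff_der with (/Gam); auto. intros; ring.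
        -- intros x _. apply cont_gen, continuity_pt_const. intros ? ?; auto.
      * auto.
      * auto.
      * rewrite E1. field. lra.
      * rewrite E0, E1. ring.
      * rewrite Hw by lra. field. lra.
    + intros; apply Rinv_0_lt_compat; lra.
    + intros; apply Rinv_0_lt_compat; lra.
    + apply Rinv_inv.
  - intros p Hp. rewrite Ha by lra. field. lra.
  - intros p Hp. rewrite Hw by lra. field. lra.
Qed.
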